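(* Let $K$ be a complete $3$-partite $3$-graph on $k\ge3$ vertices. For every $\epsilon,\beta,\mu'>0$ and all positive integers $i_0,r$, there exist $\beta'>0$, a positive integer $i_0'$ and $n_0$ such that the following holds for every $n\ge n_0$. Let $H$ be an $n$-vertex $3$-graph with a partition $\mathcal P=\{V_0,V_1,\dots,V_r\}$ of $V(H)$ such that for each $j\in[r]$, $|V_j|\ge\epsilon^2 n/2$ and $V_j$ is $(\beta,i_0)$-closed in $H$. If $\mathbf u_j-\mathbf u_l\in L^{\mu'}_{\mathcal P,K}(H)$ for all $1\le j<l\le r$, then $V(H)\setminus V_0$ is $(\beta',i_0')$-closed in $H$.
   Context: A complete $3$-partite $3$-graph has its vertex set split into three nonempty parts, with edges exactly the triples meeting each part once. A $K$-factor of a $3$-graph is a collection of vertex-disjoint copies of $K$ covering all its vertices. For an $n$-vertex $3$-graph $H$, $\beta>0$, $i\in\mathbb N$, two vertices $u,v$ are $(\beta,i)$-reachable in $H$ if there are at least $\beta n^{ik-1}$ sets $W\subseteq V(H)$ of size $ik-1$ such that both $H[\{u\}\cup W]$ and $H[\{v\}\cup W]$ contain $K$-factors; a set $A$ is $(\beta,i)$-closed in $H$ if every two vertices of $A$ are $(\beta,i)$-reachable in $H$. For a partition $\mathcal P=\{V_0,V_1,\dots,V_r\}$ of $V(H)$ and $S\subseteq V(H)$, the index vector $\mathbf i_{\mathcal P}(S)\in\mathbb Z^r$ has $j$-th coordinate $|S\cap V_j|$ for $j\in[r]$ ($V_0$ is ignored). A $k$-vector $\mathbf v\in\mathbb Z^r$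 (nonnegative coordinates summing to $k$) is a $\mu$-robust $K$-vector if at least $\mu|V(H)|^k$ copies $K'$ of $K$ in $H$ satisfy $\mathbf i_{\mathcal P}(V(K'))=\mathbf v$. $L^{\mu}_{\mathcal P,K}(H)$ is the lattice in $\mathbb Z^r$ consisting of all integer linear combinations of the $\mu$-robust $K$-vectors. $\mathbf u_j\in\mathbb Z^r$ is the $j$-th unit vector. *)

(* Defs.v *)
From HB Require Import structures.
From mathcomp Require Import all_boot all_order all_algebra.
From mathcomp Require Import reals.
Set Implicit Arguments. Unset Strict Implicit. Unset Printing Implicit Defensive.
Import Order.TTheory GRing.Theory Num.Theory.
Local Open Scope ring_scope.

Definition uniform3 (V : finType) (H : {set {set V}}) : Prop :=
  forall e, e \in H -> #|e| = 3%N.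

Definition complete3partite (k : nat) (KE : {set {set 'I_k}}) : Prop :=
  exists p : 'I_k -> 'I_3,
    (forall c : 'I_3, exists x, p x = c) /\
    KE = [set e : {set 'I_k} | (#|e| == 3%N) && ([set p x | x in e] == [set: 'I_3])].

Definition embedding (V : finType) (k : nat) (KE : {set {set 'I_k}})
  (H : {set {set V}}) (f : {ffun 'I_k -> V}) : bool :=
  injectiveb f && [forall e in KE, f @: e \in H].

Definition copies (V : finType) (k : nat) (KE : {set {set 'I_k}})
  (H : {set {set V}}) : {set {set {set V}}} :=
  [set F : {set {set V}} | [exists f : {ffun 'I_k -> V},
     embedding KE H f && (F == [set (f : 'I_k -> V) @: e | e : {set 'I_k} in KE])]].

(* H[S] contains a K-factor: S is partitioned into vertex sets of copies of K
   in H (each copy lies inside S, hence inside H[S]). *)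
Definition has_Kfactor (V : finType) (k : nat) (KE : {set {set 'I_k}})
  (H : {set {set V}}) (S : {set V}) : bool :=
  [exists P : {set {set V}}, partition P S &&
     [forall B in P, [exists f : {ffun 'I_k -> V},
        embedding KE H f && (f @: setT == B)]]].

Definition reachable (R : realType) (V : finType) (k : nat)
  (KE : {set {set 'I_k}}) (H : {set {set V}}) (beta : R) (i : nat) (u v : V) : Prop :=
  beta * (#|V|%:R) ^+ (i * k).-1 <=
  #|[set W : {set V} | (#|W| == (i * k).-1)%N
        && has_Kfactor KE H (u |: W) && has_Kfactor KE H (v |: W)]|%:R.

Definition closed_set (R : realType) (V : finType) (k : nat)
  (KE : {set {set 'I_k}}) (H : {set {set V}}) (beta : R) (i : nat) (A : {set V}) : Prop :=
  forall u v, u \in A -> v \in A -> reachable KE H beta i u v.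

(* Partition P = {V_0, ..., V_r} given by a labelling pt : V -> 'I_r.+1;
   V_0 = pt^-1(0) and, for j : 'I_r, part j is V_{j+1}. *)
Definition Vpart (V : finType) (r : nat) (pt : V -> 'I_r.+1) (j : 'I_r) : {set V} :=
  [set x | pt x == lift ord0 j].

Definition V0 (V : finType) (r : nat) (pt : V -> 'I_r.+1) : {set V} :=
  [set x | pt x == ord0].

Definition ivec (V : finType) (r : nat) (pt : V -> 'I_r.+1) (S : {set V}) : 'rV[int]_r :=
  \row_(j < r) (#|S :&: Vpart pt j|%:Z).

Definition kvector (r k : nat) (v : 'rV[int]_r) : Prop :=
  (forall j, 0 <= v ord0 j) /\ \sum_(j < r) v ord0 j = k%:Z.

Definition robust (R : realType) (V : finType) (k r : nat) (KE : {set {set 'I_k}})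
  (H : {set {set V}}) (pt : V -> 'I_r.+1) (mu : R) (v : 'rV[int]_r) : Prop :=
  kvector k v /\
  mu * (#|V|%:R) ^+ k <=
  #|[set F in copies KE H | ivec pt (\bigcup_(e in F) e) == v]|%:R.

Definition in_lattice (R : realType) (V : finType) (k r : nat) (KE : {set {set 'I_k}})
  (H : {set {set V}}) (pt : V -> 'I_r.+1) (mu : R) (v : 'rV[int]_r) : Prop :=
  exists cs : seq ('rV[int]_r * int),
    (forall p, p \in cs -> robust KE H pt mu p.1) /\
    v = \sum_(p <- cs) p.1 *~ p.2.

Definition unitv (r : nat) (j : 'I_r) : 'rV[int]_r := delta_mx ord0 j.

(* Main.v *)
Require Import Defs.
From HB Require Import structures.
From mathcomp Require Import all_boot all_order all_algebra.
From mathcomp Require Import reals.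
Set Implicit Arguments. Unset Strict Implicit. Unset Printing Implicit Defensive.
Import Order.TTheory GRing.Theory Num.Theory.

Lemma bin_le_pow n s : 'C(n, s) <= n ^ s.
Proof.
apply: (@leq_trans ('C(n, s) * s`!)); first by rewrite leq_pmulr ?fact_gt0.
rewrite bin_ffact ffact_prod.
apply: (@leq_trans (\prod_(i < s) n)); first by apply: leq_prod => i _; rewrite leq_subr.
by rewrite prod_nat_const card_ord.
Qed.

Lemma card_bigcup_seq (T I : finType) (s : seq I) (F : I -> {set T}) :
  #|\bigcup_(i <- s) F i| <= \sum_(i <- s) #|F i|.
Proof.
elim: s => [|a s IH]; first by rewrite !big_nil cards0.
rewrite !big_cons; apply: leq_trans (leq_card_setU _ _) _.
by rewrite leq_add2l.
Qed.

Lemma card_fiber_le (T U : finType) (f : T -> U) (A : {set T}) c :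
  (forall y, #|[set x in A | f x == y]| <= c) -> #|A| <= #|f @: A| * c.
Proof.
move=> Hc; rewrite -sum1_card (partition_big_imset f) /= -sum_nat_const.
apply: leq_sum => y _; rewrite sum1_card.
rewrite (eq_card (B := [set x in A | f x == y])) ?Hc // => x.
by rewrite !inE.
Qed.

Section Counting.
Variable V : finType.

Lemma card_sizes s : #|[set W : {set V} | #|W| == s]| <= #|V| ^ s.
Proof. by rewrite card_draws bin_le_pow. Qed.

Lemma card_contain (x : V) s :
  #|[set W : {set V} | (#|W| == s.+1) && (x \in W)]| <= #|V| ^ s.
Proof.
apply: leq_trans (card_sizes s).
rewrite -(@card_in_imset _ _ (fun W => W :\ x)).
  apply: subset_leq_card; apply/subsetP => Z /imsetP[W].
  rewrite inE => /andP[/eqP HW xW] ->; rewrite inE.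
  by rewrite (cardsD1 x W) xW /= add1n in HW; case: HW => ->.
move=> W1 W2; rewrite !inE => /andP[_ x1] /andP[_ x2] E.
by rewrite -(setD1K x1) -(setD1K x2) E.
Qed.
Lemma card_meet (X : {set V}) s :
  #|[set W : {set V} | (#|W| == s.+1) && ~~ [disjoint W & X]]| <= #|X| * #|V| ^ s.
Proof.
apply: (@leq_trans
  #|\bigcup_(x <- enum X) [set W : {set V} | (#|W| == s.+1) && (x \in W)]|).
  apply: subset_leq_card; apply/subsetP => W; rewrite inE => /andP[HW].
  case/pred0Pn => x /= /andP[xW xX].
  rewrite bigcup_seq; apply/bigcupP; exists x; first by rewrite mem_enum.
  by rewrite inE HW xW.
apply: leq_trans (card_bigcup_seq _ _) _.
rewrite big_enum /= -sum_nat_const; apply: leq_sum => x _; exact: card_contain.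
Qed.
Lemma union_count (A : {set {set V}}) (B : {set V} -> {set {set V}})
  (C : {set {set V}}) S :
  (forall x, x \in A -> forall y, y \in B x ->
     [/\ [disjoint x & y], x :|: y \in C & #|x :|: y| <= S]) ->
  \sum_(x in A) #|B x| <= #|C| * 2 ^ S.
Proof.
move=> HB.
pose P := [set p : {set V} * {set V} | (p.1 \in A) && (p.2 \in B p.1)].
have cardP : #|P| = \sum_(x in A) #|B x|.
  rewrite -sum1_card.
  rewrite (eq_bigr (fun x => \sum_(y in B x) 1)); last by move=> x _; rewrite sum1_card.
  rewrite pair_big_dep /=; apply: eq_bigl => p; by rewrite inE.
apply: (@leq_trans #|P|).
  by rewrite cardP.
apply: leq_trans (card_fiber_le (f := fun p => p.1 :|: p.2) (A := P) (c := 2 ^ S) _) _.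
  move=> y.
  case: (set_0Vmem [set x in P | x.1 :|: x.2 == y]) => [-> | [p0 Hp0]].
    by rewrite cards0.
  move: Hp0; rewrite !inE => /andP[/andP[Ap0 Bp0] /eqP Ey].
  have [_ _ Sy] := HB _ Ap0 _ Bp0; rewrite Ey in Sy.
  apply: (@leq_trans (2 ^ #|y|)); last by rewrite leq_pexp2l.
  rewrite -card_powerset -(@card_in_imset _ _ (fun p => p.1)).
    apply: subset_leq_card; apply/subsetP => z /imsetP[p]; rewrite !inE.
    by move=> /andP[_ /eqP <-] ->; rewrite subsetUl.
  move=> [p1 p2] [q1 q2]; rewrite !inE /= => /andP[/andP[Ap Bp] /eqP Ep].
  move=> /andP[/andP[Aq Bq] /eqP Eq] E1; subst q1.
  have [dp _ _] := HB _ Ap _ Bp; have [dq _ _] := HB _ Aq _ Bq.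
  have e (a b : {set V}) : [disjoint a & b] -> (a :|: b) :\: a = b.
    by move=> d; rewrite setDUl setDv set0U; apply/setDidPl; rewrite disjoint_sym.
  by rewrite -(e _ _ dp) -(e _ _ dq) Ep Eq.
apply: leq_mul => //; apply: subset_leq_card; apply/subsetP => z /imsetP[p].
rewrite inE => /andP[Ap Bp] ->; by have [_ ? _] := HB _ Ap _ Bp.
Qed.
End Counting.

From HB Require Import structures.
From mathcomp Require Import all_boot all_order all_algebra.
From mathcomp Require Import reals.
Set Implicit Arguments. Unset Strict Implicit. Unset Printing Implicit Defensive.
Import Order.TTheory GRing.Theory Num.Theory.

Section KF.
Variables (V : finType) (k : nat) (KE : {set {set 'I_k}}) (H : {set {set V}}).
Local Notation KF := (has_Kfactor KE H).

Lemma KF0 : KF set0.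
Proof.
apply/existsP; exists set0; rewrite partition_set0 eqxx /=.
by apply/forall_inP => B; rewrite inE.
Qed.

Lemma KFU (A B : {set V}) : [disjoint A & B] -> KF A -> KF B -> KF (A :|: B).
Proof.
move=> dAB /existsP[PA /andP[pA fA]] /existsP[PB /andP[pB fB]].
apply/existsP; exists (PA :|: PB); apply/andP; split.
  case/and3P: pA => /eqP cA tA nA; case/and3P: pB => /eqP cB tB nB.
  apply/and3P; split.
  - by apply/eqP; rewrite -cA -cB /cover bigcup_setU.
  - by apply: trivIsetU tA tB _; rewrite cA cB.
  - by rewrite inE negb_or nA nB.
apply/forall_inP => X; rewrite inE => /orP[XA|XB].
  by move/forall_inP: fA; apply.
by move/forall_inP: fB; apply.
Qed.

Lemma KF_block (f : {ffun 'I_k -> V}) :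
  (0 < k)%N -> embedding KE H f -> KF (f @: setT).
Proof.
move=> k0 ef; apply/existsP; exists [set f @: setT]; apply/andP; split.
  rewrite /partition cover1 eqxx trivIset1 /= inE eq_sym.
  apply/set0Pn; exists (f (Ordinal k0)); apply/imsetP; exists (Ordinal k0) => //.
apply/forall_inP => X; rewrite inE => /eqP ->; apply/existsP; exists f.
by rewrite ef eqxx.
Qed.

End KF.

From HB Require Import structures.
From mathcomp Require Import all_boot all_order all_algebra.
From mathcomp Require Import reals.
Set Implicit Arguments. Unset Strict Implicit. Unset Printing Implicit Defensive.
Import Order.TTheory GRing.Theory Num.Theory.

Lemma cardsU_disj (T : finType) (A B : {set T}) :
  [disjoint A & B] -> #|A :|: B| = (#|A| + #|B|)%N.
Proof. by move=> d; rewrite cardsU disjoint_setI0 // cards0 subn0. Qed.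

Lemma card_cond (T : finType) (A : {set T}) (P : pred T) :
  #|A :&: [set x | P x]| = \sum_(x in A) (P x : nat).
Proof.
rewrite -sum1_card big_mkcond /= [RHS]big_mkcond; apply: eq_bigr => x _.
by rewrite !inE; case: (x \in A); case: (P x).
Qed.

Section Ivec.
Variables (V : finType) (r : nat) (pt : V -> 'I_r.+1).
Local Open Scope ring_scope.

Lemma sum_parts (A : {set V}) :
  (\sum_(j < r) #|A :&: Vpart pt j|)%N = #|A :\: V0 pt|.
Proof.
rewrite setDE (eq_bigr (fun j => \sum_(x in A) ((pt x == lift ord0 j) : nat)))%N;
  last by move=> j _; rewrite -card_cond.
rewrite exchange_big /= (_ : ~: V0 pt = [set x | pt x != ord0]); last first.
  by apply/setP => x; rewrite !inE.
rewrite card_cond; apply: eq_bigr => x _.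
case: (unliftP ord0 (pt x)) => [j -> | ->]; last first.
  by rewrite eqxx /= big1.
rewrite eq_sym (neq_lift ord0 j) (bigD1 j) //= eqxx big1 //.
by move=> i /negbTE ij; rewrite (inj_eq (@lift_inj _ ord0)) eq_sym ij.
Qed.

Lemma ivecU (A B : {set V}) : [disjoint A & B] ->
  ivec pt (A :|: B) = ivec pt A + ivec pt B.
Proof.
move=> d; apply/rowP => j; rewrite !mxE setIUl cardsU_disj ?PoszD //.
by apply: disjointW d; apply: subsetIl.
Qed.

Lemma ivec0 : ivec pt set0 = 0.
Proof. by apply/rowP => j; rewrite !mxE set0I cards0. Qed.

Lemma ivec1 (x : V) (j : 'I_r) : pt x = lift ord0 j -> ivec pt [set x] = unitv j.
Proof.
move=> e; apply/rowP => i; rewrite !mxE eqxx /=.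
case: (eqVneq j i) => [<-|ji].
  by rewrite (setIidPl _) ?cards1 // sub1set inE e.
rewrite (_ : _ :&: _ = set0) ?cards0 //; apply/setP => y; rewrite !inE.
apply/negP => /andP[/eqP -> ]; rewrite e (inj_eq (@lift_inj _ ord0)).
by rewrite (negbTE ji).
Qed.

Lemma ivecD1 (A : {set V}) x : x \in A -> ivec pt A = ivec pt [set x] + ivec pt (A :\ x).
Proof.
move=> xA; rewrite -ivecU ?setD1K //.
by rewrite disjoints1 !inE eqxx.
Qed.

Lemma sum_ivec (A : {set V}) : \sum_(j < r) ivec pt A ord0 j = (#|A :\: V0 pt|)%:Z.
Proof.
rewrite -sum_parts (big_morph Posz PoszD (erefl _)); apply: eq_bigr => j _.
by rewrite mxE.
Qed.

Lemma ivec_nonempty (A : {set V}) : A \subset ~: V0 pt -> ivec pt A = 0 -> A = set0.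
Proof.
move=> sA e; apply/setP => x; rewrite inE; apply/negP => xA.
have := subsetP sA x xA; rewrite !inE; case: (unliftP ord0 (pt x)) => [j ptx _ | ->]; last by rewrite eqxx.
have := congr1 (fun M : 'rV[int]_r => M ord0 j) e; rewrite !mxE.
case=> /eqP; rewrite cards_eq0 => /eqP/setP/(_ x); rewrite !inE xA /=.
by rewrite ptx eqxx.
Qed.

End Ivec.

From HB Require Import structures.
From mathcomp Require Import all_boot all_order all_algebra.
From mathcomp Require Import reals.
Set Implicit Arguments. Unset Strict Implicit. Unset Printing Implicit Defensive.
Import Order.TTheory GRing.Theory Num.Theory.

Section Copies.
Variables (V : finType) (k r : nat) (KE : {set {set 'I_k}}) (H : {set {set V}})
  (pt : V -> 'I_r.+1).
Local Open Scope ring_scope.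

Definition cvs (F : {set {set V}}) : {set V} := \bigcup_(e in F) e.

Definition copiesw (w : 'rV[int]_r) :=
  [set F in copies KE H | ivec pt (cvs F) == w].

Definition Gw (w : 'rV[int]_r) := [set cvs F | F in copiesw w].

Lemma cvs_sub F : F \in copies KE H ->
  exists f : {ffun 'I_k -> V}, [/\ embedding KE H f, cvs F \subset f @: setT &
     #|f @: (setT : {set 'I_k})| = k].
Proof.
rewrite inE => /existsP[f /andP[ef /eqP EF]]; exists f; split => //.
  apply/subsetP => x /bigcupP[e]; rewrite EF => /imsetP[e' _ ->] /imsetP[y _ ->].
  by apply/imsetP; exists y; rewrite ?inE.
move: ef => /andP[/injectiveP inj _].
by rewrite card_imset // cardsT card_ord.
Qed.

Lemma copy_count w : (#|copiesw w| <= #|Gw w| * 2 ^ (2 ^ k))%N.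
Proof.
apply: card_fiber_le => c.
case: (set_0Vmem [set x in copiesw w | cvs x == c]) => [-> | [F0 HF0]].
  by rewrite cards0.
have ck : (#|c| <= k)%N.
  move: HF0; rewrite inE => /andP[]; rewrite inE => /andP[F0c _] /eqP <-.
  have [f [_ s e]] := cvs_sub F0c; by rewrite -e subset_leq_card.
apply: (@leq_trans #|powerset (powerset c)|).
  apply: subset_leq_card; apply/subsetP => F; rewrite !inE => /andP[_ /eqP <-].
  apply/subsetP => e eF; rewrite inE; exact: bigcup_sup.
by rewrite !card_powerset leq_pexp2l // leq_pexp2l.
Qed.

Lemma Gw_props w c : (0 < k)%N -> kvector k w -> c \in Gw w ->
  [/\ has_Kfactor KE H c, c \subset ~: V0 pt, #|c| = k & ivec pt c = w].
Proof.
move=> k0 [_ sw] /imsetP[F]; rewrite inE => /andP[Fc /eqP iw] ->.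
have [f [ef s e]] := cvs_sub Fc.
have h1 : (k <= #|cvs F :\: V0 pt|)%N.
  by have := sum_ivec pt (cvs F); rewrite iw sw => -[->].
have h2 : (#|cvs F :\: V0 pt| <= #|cvs F|)%N by apply: subset_leq_card; apply: subsetDl.
have h3 : (#|cvs F| <= k)%N by rewrite -e subset_leq_card.
have E1 : cvs F = f @: setT.
  apply/eqP; rewrite eqEcard s e; exact: leq_trans h1 h2.
have E2 : cvs F :\: V0 pt = cvs F.
  apply/eqP; rewrite eqEcard subsetDl; exact: leq_trans h3 h1.
split => //.
- by rewrite E1; apply: KF_block.
- by rewrite -E2 setDE subsetIr.
- by apply/eqP; rewrite eqn_leq h3 (leq_trans h1 h2).
Qed.

End Copies.

From HB Require Import structures.
From mathcomp Require Import all_boot all_order all_algebra.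
From mathcomp Require Import reals.
From Stdlib Require Import ClassicalEpsilon.
Set Implicit Arguments. Unset Strict Implicit. Unset Printing Implicit Defensive.
Import Order.TTheory GRing.Theory Num.Theory.

Definition pb (P : Prop) : bool :=
  if excluded_middle_informative P then true else false.

Lemma pbP (P : Prop) : reflect P (pb P).
Proof. rewrite /pb; case: excluded_middle_informative => h; constructor => //. Qed.

Lemma avoid_lb (V : finType) (G : {set {set V}}) (X : {set V}) b :
  (forall W, W \in G -> #|W| = b.+1) ->
  (#|G| <= #|[set W in G | [disjoint W & X]]| + #|X| * #|V| ^ b)%N.
Proof.
move=> HG; apply: leq_trans (leq_add (leqnn _) (card_meet X b)).
apply: leq_trans (leq_card_setU _ _); apply: subset_leq_card.
apply/subsetP => W WG; rewrite !inE WG /= HG // eqxx /=.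
by case: [disjoint W & X].
Qed.

Section Inv.
Variables (V : finType) (k r : nat) (KE : {set {set 'I_k}}) (H : {set {set V}})
  (pt : V -> 'I_r.+1) (u v : V).
Local Notation KF := (has_Kfactor KE H).
Local Open Scope ring_scope.

Definition Inv (d : 'rV[int]_r) (t : nat) (Z : {set V}) : Prop :=
  exists D1 D2 : {set V},
    [/\ D1 \subset u |: Z, D2 \subset v |: Z, D1 \subset ~: V0 pt, D2 \subset ~: V0 pt &
        [/\ #|D1| = t, ivec pt D1 - ivec pt D2 = d,
         KF ((u |: Z) :\: D1) & KF ((v |: Z) :\: D2)]].

Definition Fam d t s := [set Z : {set V} | (#|Z| == s) && pb (Inv d t Z)].

Definition Bvalid d t b (Z : {set V}) :=
  [set W : {set V} | [&& #|W| == b, [disjoint W & u |: (v |: Z)] & pb (Inv d t (Z :|: W))]].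

Lemma step_gen d t s d' t' b :
  (\sum_(Z in Fam d t s) #|Bvalid d' t' b Z| <= #|Fam d' t' (s + b)| * 2 ^ (s + b))%N.
Proof.
apply: union_count => Z; rewrite inE => /andP[/eqP sZ _] W; rewrite inE.
case/and3P => /eqP bW dW IW.
have dZW : [disjoint Z & W].
  by rewrite disjoint_sym; apply: disjointWr dW; apply/subsetP => x xZ; rewrite !inE xZ !orbT.
by rewrite inE cardsU_disj // sZ bW eqxx IW.
Qed.

Lemma Inv_copy d t (Z W : {set V}) (neg : bool) :
  Inv d t Z -> [disjoint W & u |: (v |: Z)] -> KF W -> W \subset ~: V0 pt ->
  #|W| = k ->
  Inv (if neg then d - ivec pt W else d + ivec pt W)
      (if neg then t else t + k)%N (Z :|: W).
Proof.
move=> [D1 [D2 [s1 s2 s1' s2' [c1 e KF1 KF2]]]] dW KFW sW cW.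
have xW x : x \in W -> [/\ x != u, x != v & x \notin Z].
  by move=> xW; move: (disjointFr dW xW); rewrite !inE => /norP[-> /norP[-> ->]].
have nD1 x : x \in W -> x \notin D1.
  move=> /xW[a _ c]; apply/negP => /(subsetP s1); by rewrite !inE (negbTE a) (negbTE c).
have nD2 x : x \in W -> x \notin D2.
  move=> /xW[_ a c]; apply/negP => /(subsetP s2); by rewrite !inE (negbTE a) (negbTE c).
have dD1 : [disjoint D1 & W].
  by rewrite disjoint_sym; apply/pred0P => x /=; apply/negP => /andP[/nD1/negP].
have dD2 : [disjoint D2 & W].
  by rewrite disjoint_sym; apply/pred0P => x /=; apply/negP => /andP[/nD2/negP].
have sub1 (D : {set V}) a : D \subset a |: Z -> D \subset a |: (Z :|: W).
  move=> sD; apply/subsetP => x /(subsetP sD); rewrite !inE => /orP[->|->] //.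
  by rewrite orbT.
case: neg.
- exists D1, (D2 :|: W); split.
  + exact: sub1.
  + by apply/subsetP => x; rewrite !inE => /orP[/(subsetP s2)|->]; rewrite ?inE;
      [case/orP => ->; rewrite ?orbT | rewrite !orbT].
  + by [].
  + by rewrite subUset s2' sW.
  + split.
    * by [].
    * by rewrite ivecU // opprD addrA e.
    * rewrite (_ : _ :\: D1 = ((u |: Z) :\: D1) :|: W).
        apply: KFU => //; apply/pred0P => x /=; apply/negP => /andP[].
        by rewrite !inE => /andP[_ /orP[/eqP->|xZ]] /xW[]; rewrite ?eqxx // xZ.
      apply/setP => x; rewrite !inE; case xW': (x \in W); last by rewrite !orbF.
      by rewrite (negbTE (nD1 _ xW')) !orbT.
    * rewrite (_ : _ :\: _ = (v |: Z) :\: D2); first by [].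
      apply/setP => x; rewrite !inE; case xW': (x \in W); last by rewrite !orbF.
      by rewrite !orbT /=; have [_ b c] := xW _ xW'; rewrite (negbTE b) (negbTE c) andbF.
- exists (D1 :|: W), D2; split.
  + by apply/subsetP => x; rewrite !inE => /orP[/(subsetP s1)|->]; rewrite ?inE;
      [case/orP => ->; rewrite ?orbT | rewrite !orbT].
  + exact: sub1.
  + by rewrite subUset s1' sW.
  + by [].
  + split.
    * by rewrite cardsU_disj // c1 cW.
    * by rewrite ivecU // addrAC e.
    * rewrite (_ : _ :\: _ = (u |: Z) :\: D1); first by [].
      apply/setP => x; rewrite !inE; case xW': (x \in W); last by rewrite !orbF.
      by rewrite !orbT /=; have [a _ c] := xW _ xW'; rewrite (negbTE a) (negbTE c) andbF.
    * rewrite (_ : _ :\: D2 = ((v |: Z) :\: D2) :|: W).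
        apply: KFU => //; apply/pred0P => x /=; apply/negP => /andP[].
        by rewrite !inE => /andP[_ /orP[/eqP->|xZ]] /xW[]; rewrite ?eqxx // xZ.
      apply/setP => x; rewrite !inE; case xW': (x \in W); last by rewrite !orbF.
      by rewrite (negbTE (nD2 _ xW')) !orbT.
Qed.

Lemma setpair (a x : V) (Z W D : {set V}) :
  x \in D -> D \subset a |: Z -> [disjoint W & a |: Z] ->
  (a |: (Z :|: W)) :\: (D :\ x) = ((a |: Z) :\: D) :|: (x |: W).
Proof.
move=> xD sD dW; apply/setP => z; rewrite !inE.
case: (eqVneq z x) => [->|zx] /=.
  by have := subsetP sD x xD; rewrite !inE => /orP[->|->]; rewrite ?orbT.
case zW: (z \in W).
  have := disjointFr dW zW; rewrite !inE => /norP[/negbTE -> /negbTE ->].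
  have zD : z \notin D by apply/negP => /(subsetP sD); rewrite (disjointFr dW zW).
  by rewrite (negbTE zD) !orbT.
by rewrite !orbF.
Qed.

Lemma Inv_pair t Z : Inv 0 t.+1 Z -> exists x y, exists j : 'I_r,
  [/\ pt x = lift ord0 j, pt y = lift ord0 j &
   forall W : {set V}, [disjoint W & u |: (v |: Z)] -> KF (x |: W) -> KF (y |: W) ->
     Inv 0 t (Z :|: W)].
Proof.
move=> [D1 [D2 [s1 s2 s1' s2' [c1 e KF1 KF2]]]].
have [x xD1] : exists x, x \in D1.
  by apply/set0Pn; rewrite -card_gt0 c1.
have := subsetP s1' x xD1; rewrite !inE; case: (unliftP ord0 (pt x)) => [j ptx _|->]; last by rewrite eqxx.
have e' : ivec pt D1 = ivec pt D2 by apply/eqP; rewrite -subr_eq0 e.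
have [y yD2 ptyj] : exists2 y, y \in D2 & pt y = lift ord0 j.
  have : (0 < #|D2 :&: Vpart pt j|)%N.
    have := congr1 (fun M : 'rV[int]_r => M ord0 j) e'; rewrite !mxE => -[E]; rewrite -?E.
    rewrite card_gt0; apply/set0Pn; exists x; rewrite inE xD1 /Vpart inE; apply/eqP; exact: ptx.
  rewrite card_gt0 => /set0Pn[y]; rewrite !inE => /andP[yD /eqP py]; by exists y.
exists x, y, j; split => // W dW KFx KFy.
have dWu : [disjoint W & u |: Z].
  by apply: disjointWr dW; apply/subsetP => z; rewrite !inE => /orP[->|->]; rewrite ?orbT.
have dWv : [disjoint W & v |: Z].
  by apply: disjointWr dW; apply/subsetP => z; rewrite !inE => /orP[->|->]; rewrite ?orbT.
have sub1 (D : {set V}) a : D \subset a |: Z -> D \subset a |: (Z :|: W).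
  move=> sD; apply/subsetP => z /(subsetP sD); rewrite !inE => /orP[->|->] //.
  by rewrite orbT.
exists (D1 :\ x), (D2 :\ y); split.
- by apply: sub1; apply: subset_trans s1; apply: subsetDl.
- by apply: sub1; apply: subset_trans s2; apply: subsetDl.
- by apply: subset_trans s1'; apply: subsetDl.
- by apply: subset_trans s2'; apply: subsetDl.
split.
- by move: c1; rewrite (cardsD1 x D1) xD1 => -[].
- move: e'; rewrite (ivecD1 pt xD1) (ivecD1 pt yD2) (ivec1 ptx) (ivec1 ptyj).
  by move/addrI ->; rewrite subrr.
- rewrite setpair //; apply: KFU => //.
  apply/pred0P => z /=; apply/negP => /andP[]; rewrite !inE => /andP[zD zuZ].
  case/orP => [/eqP zx | zW]; first by rewrite zx xD1 in zD.
  by have := disjointFr dWu zW; rewrite !inE zuZ.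
- rewrite setpair //; apply: KFU => //.
  apply/pred0P => z /=; apply/negP => /andP[]; rewrite !inE => /andP[zD zuZ].
  case/orP => [/eqP zy | zW]; first by rewrite zy yD2 in zD.
  by have := disjointFr dWv zW; rewrite !inE zuZ.
Qed.

Lemma Inv_start : u \in ~: V0 pt -> v \in ~: V0 pt ->
  Inv (ivec pt [set u] - ivec pt [set v]) 1 set0.
Proof.
move=> hu hv; exists [set u], [set v]; split.
- by rewrite setU0.
- by rewrite setU0.
- by rewrite sub1set.
- by rewrite sub1set.
split.
- by rewrite cards1.
- by [].
- by rewrite setU0 setDv; apply: KF0.
- by rewrite setU0 setDv; apply: KF0.
Qed.

Lemma Inv_finish Z : Inv 0 0 Z -> KF (u |: Z) /\ KF (v |: Z).
Proof.
move=> [D1 [D2 [s1 s2 s1' s2' [c1 e KF1 KF2]]]].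
move/eqP: c1; rewrite cards_eq0 => /eqP D10.
have D20 : D2 = set0.
  apply: (ivec_nonempty s2'); apply/eqP; move: e; rewrite D10 ivec0 sub0r.
  by move/eqP; rewrite oppr_eq0.
by move: KF1 KF2; rewrite D10 D20 !setD0.
Qed.

End Inv.

From HB Require Import structures.
From mathcomp Require Import all_boot all_order all_algebra.
From mathcomp Require Import reals.
From Stdlib Require Import ClassicalEpsilon.
From mathcomp Require Import lra ring zify.
Set Implicit Arguments. Unset Strict Implicit. Unset Printing Implicit Defensive.
Import Order.TTheory GRing.Theory Num.Theory.
Local Open Scope ring_scope.

Section Real.
Variables (R : realType) (V : finType).
Local Notation nR := (#|V|%:R : R).

Lemma lb_real (G B : {set {set V}}) (X : {set V}) b (g : R) :
  (forall W, W \in G -> #|W| = b.+1) ->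
  [set W in G | [disjoint W & X]] \subset B ->
  g * nR ^+ b.+1 <= #|G|%:R ->
  (2 * #|X|)%:R <= g * nR ->
  g / 2 * nR ^+ b.+1 <= #|B|%:R.
Proof.
move=> HG sB hG hX.
have h1 := avoid_lb X HG.
have h2 : (#|[set W in G | [disjoint W & X]]| <= #|B|)%N by apply: subset_leq_card.
have h3 : #|G|%:R <= #|B|%:R + #|X|%:R * nR ^+ b :> R.
  rewrite -natrX -natrM -natrD ler_nat; apply: leq_trans h1 _.
  by rewrite leq_add2r.
have h4 : #|X|%:R * nR ^+ b <= g / 2 * nR ^+ b.+1.
  rewrite exprS; have hN : 0 <= nR ^+ b by rewrite exprn_ge0 ?ler0n.
  move: hX; rewrite natrM => hX.
  set N := nR ^+ b in hN *; set x := #|X|%:R in hX *.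
  have hp : 0 <= N * (g * nR - 2%:R * x) by apply: mulr_ge0 => //; rewrite subr_ge0.
  nra.
lra.
Qed.
End Real.

Section Steps.
Variables (R : realType) (V : finType) (k r : nat) (KE : {set {set 'I_k}})
  (H : {set {set V}}) (pt : V -> 'I_r.+1) (u v : V).
Local Notation nR := (#|V|%:R : R).
Local Notation Fam := (Fam KE H pt u v).
Local Notation Bvalid := (Bvalid KE H pt u v).

Lemma step_delta d t s d' t' b (c g : R) Stot :
  0 <= c -> 0 <= g -> (s + b <= Stot)%N ->
  (forall Z, Z \in Fam d t s -> g / 2 * nR ^+ b <= #|Bvalid d' t' b Z|%:R) ->
  c * nR ^+ s <= #|Fam d t s|%:R ->
  c * (g / 2 / 2 ^+ Stot) * nR ^+ (s + b)%N <= #|Fam d' t' (s + b)%N|%:R.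
Proof.
move=> c0 g0 sb hB hF.
have hs := step_gen KE H pt u v d t s d' t' b.
have h1 : #|Fam d t s|%:R * (g / 2 * nR ^+ b) <= #|Fam d' t' (s + b)|%:R * 2 ^+ (s + b) :> R.
  apply: le_trans (_ : (\sum_(Z in Fam d t s) #|Bvalid d' t' b Z|)%:R <= _).
    rewrite natr_sum mulr_natl -sumr_const; apply: ler_sum => Z HZ; exact: hB.
  by rewrite -natrX -natrM ler_nat.
have P0 : (0 : R) < 2 ^+ (s + b) by rewrite exprn_gt0 ?ltr0n.
have PQ : (2 : R) ^+ (s + b) <= 2 ^+ Stot by rewrite ler_eXn2l ?ltr1n.
have N1 : (0 : R) <= nR ^+ s by rewrite exprn_ge0 ?ler0n.
have N2 : (0 : R) <= nR ^+ b by rewrite exprn_ge0 ?ler0n.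
have A0 : (0 : R) <= #|Fam d' t' (s + b)|%:R by rewrite ler0n.
have Q0 : (0 : R) < 2 ^+ Stot by rewrite exprn_gt0 ?ltr0n.
have key : c * (g / 2) * (nR ^+ s * nR ^+ b) <= #|Fam d' t' (s + b)|%:R * 2 ^+ Stot.
  set A := #|Fam d t s|%:R in hF h1; set A' := #|Fam d' t' (s + b)|%:R in h1 A0 *.
  set X1 := nR ^+ s in hF N1 *; set X2 := nR ^+ b in h1 N2 *.
  set P := (2 : R) ^+ (s + b) in h1 P0 PQ *; set Q := (2 : R) ^+ Stot in PQ Q0 *.
  have g2 : 0 <= g / 2 by rewrite divr_ge0.
  set G := g / 2 in g2 h1 *.
  have e1 : c * X1 * (G * X2) <= A * (G * X2) by rewrite ler_wpM2r // mulr_ge0.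
  have e2 : A' * P <= A' * Q by rewrite ler_wpM2l.
  have : c * G * (X1 * X2) = c * X1 * (G * X2) by ring.
  move=> ->; apply: le_trans e1 _; apply: le_trans h1 e2.
rewrite exprD (_ : c * (g / 2 / 2 ^+ Stot) * _ = (c * (g / 2) * (nR ^+ s * nR ^+ b)) / 2 ^+ Stot).
  by rewrite ler_pdivrMr.
by ring.
Qed.

End Steps.

Section Steps2.
Variables (R : realType) (V : finType) (k r : nat) (KE : {set {set 'I_k}})
  (H : {set {set V}}) (pt : V -> 'I_r.+1) (u v : V).
Local Notation nR := (#|V|%:R : R).
Local Notation Fam := (Fam KE H pt u v).
Local Notation Bvalid := (Bvalid KE H pt u v).

Lemma cardX (Z : {set V}) : (#|u |: (v |: Z)| <= #|Z| + 2)%N.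
Proof.
rewrite !cardsU1; have := leq_b1 (u \notin v |: Z); have := leq_b1 (v \notin Z).
lia.
Qed.

Lemma copy_lb (neg : bool) w d t s Z (g mu : R) :
  (0 < k)%N -> robust KE H pt mu w -> Z \in Fam d t s ->
  g <= mu / 2 ^+ (2 ^ k) -> (2 * (s + 2))%:R <= g * nR ->
  g / 2 * nR ^+ k <=
  #|Bvalid (if neg then d - w else d + w) (if neg then t else (t + k)%N) k Z|%:R.
Proof.
move=> k0 [kw rw] HZ hg hn.
have ek : k = k.-1.+1 by rewrite prednK.
have HZ' := HZ; rewrite inE in HZ'; case/andP: HZ' => /eqP sZ /pbP IZ.
have -> : nR ^+ k = nR ^+ k.-1.+1 by rewrite prednK.
apply: (@lb_real R V (Gw KE H pt w) _ (u |: (v |: Z))).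
- by move=> W /(Gw_props k0 kw)[_ _ -> _]; rewrite -ek.
- apply/subsetP => W; rewrite inE => /andP[WG dW].
  have [KFW sW cW iW] := Gw_props k0 kw WG.
  rewrite inE cW eqxx dW /=; apply/pbP.
  by rewrite -iW; apply: Inv_copy.
- rewrite prednK //.
  have h1 : mu * nR ^+ k <= #|copiesw KE H pt w|%:R by [].
  have h2 := copy_count KE H pt w.
  have P0 : (0 : R) < 2 ^+ (2 ^ k) by rewrite exprn_gt0 ?ltr0n.
  have h3 : #|copiesw KE H pt w|%:R <= #|Gw KE H pt w|%:R * 2 ^+ (2 ^ k) :> R.
    by rewrite -natrX -natrM ler_nat.
  have N0 : (0 : R) <= nR ^+ k by rewrite exprn_ge0 ?ler0n.
  apply: le_trans (_ : mu / 2 ^+ (2 ^ k) * nR ^+ k <= _).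
    by rewrite ler_wpM2r.
  rewrite mulrAC ler_pdivrMr //; exact: le_trans h1 h3.
- apply: le_trans hn; rewrite ler_nat leq_mul2l /= -sZ; exact: cardX.
Qed.

Lemma pair_lb t s Z (beta g : R) i0 :
  (forall j, closed_set KE H beta i0 (Vpart pt j)) ->
  Z \in Fam 0 t.+1 s -> g <= beta -> (2 * (s + 2))%:R <= g * nR ->
  (1 < i0 * k)%N ->
  g / 2 * nR ^+ (i0 * k).-1 <= #|Bvalid 0 t (i0 * k).-1 Z|%:R.
Proof.
move=> cl HZ hg hn ik.
have HZ' := HZ; rewrite inE in HZ'; case/andP: HZ' => /eqP sZ /pbP IZ.
have [x [y [j [px py HW]]]] := Inv_pair IZ.
have xj : x \in Vpart pt j by rewrite inE; apply/eqP.
have yj : y \in Vpart pt j by rewrite inE; apply/eqP.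
have rxy := cl j x y xj yj.
have eb : (i0 * k).-1 = (i0 * k).-2.+1 by rewrite prednK // -ltnS prednK // ltnW.
rewrite [in X in X <= _]eb.
apply: (@lb_real R V [set W : {set V} | (#|W| == (i0 * k).-1)%N
        && has_Kfactor KE H (x |: W) && has_Kfactor KE H (y |: W)] _ (u |: (v |: Z))).
- by move=> W; rewrite inE => /andP[/andP[/eqP -> _] _].
- apply/subsetP => W; rewrite !inE => /andP[/andP[/andP[/eqP cW Kx] Ky] dW].
  rewrite cW eqxx dW /=; apply/pbP; exact: HW.
- rewrite -eb; apply: le_trans rxy; rewrite ler_wpM2r ?exprn_ge0 ?ler0n //.
- apply: le_trans hn; rewrite ler_nat leq_mul2l /= -sZ; exact: cardX.
Qed.

End Steps2.

Section Chain.
Variables (R : realType) (V : finType) (k r : nat) (KE : {set {set 'I_k}})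
  (H : {set {set V}}) (pt : V -> 'I_r.+1) (u v : V) (g : R) (Stot : nat).
Local Notation nR := (#|V|%:R : R).
Local Notation Fam := (Fam KE H pt u v).
Hypothesis g0 : 0 <= g.
Hypothesis hn : (2 * (Stot + 2))%:R <= g * nR.
Local Notation delta := (g / 2 / 2 ^+ Stot).

Lemma hn_s s : (s <= Stot)%N -> (2 * (s + 2))%:R <= g * nR.
Proof. by move=> hs; apply: le_trans hn; rewrite ler_nat leq_mul2l leq_add2r hs orbT. Qed.

Lemma chain_copy (neg : bool) (L : seq 'rV[int]_r) (mu : R) d t s (c : R) :
  (0 < k)%N -> (forall w, w \in L -> robust KE H pt mu w) -> g <= mu / 2 ^+ (2 ^ k) ->
  0 <= c -> (s + k * size L <= Stot)%N ->
  c * nR ^+ s <= #|Fam d t s|%:R ->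
  c * delta ^+ (size L) * nR ^+ (s + k * size L)%N <=
  #|Fam (if neg then d - \sum_(w <- L) w else d + \sum_(w <- L) w)
        (if neg then t else (t + k * size L)%N) (s + k * size L)%N|%:R.
Proof.
move=> k0; elim: L d t s c => [|w L IH] d t s c rL hg c0 hs hF.
  by rewrite /= big_nil subr0 addr0 muln0 !addn0 expr0 mulr1; case: neg.
have d0 : 0 <= delta by rewrite !divr_ge0 // exprn_ge0.
have hs1 : (s + k <= Stot)%N.
  by apply: leq_trans hs; rewrite leq_add2l /= mulnS leq_addr.
have h1 := @step_delta R V k r KE H pt u v d t s
   (if neg then d - w else d + w) (if neg then t else (t + k)%N) k c g Stot c0 g0 hs1.
have h2 := h1 (fun Z HZ => copy_lb neg k0 (rL w (mem_head _ _)) HZ hg (hn_s (leq_trans (leq_addr _ _) hs1))) hF.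
have hs2 : (s + k + k * size L <= Stot)%N by rewrite -addnA -mulnS.
have rL' : forall x, x \in L -> robust KE H pt mu x.
  by move=> x xL; apply: rL; rewrite inE xL orbT.
have := IH _ _ _ _ rL' hg (mulr_ge0 c0 d0) hs2 h2.
clear IH rL rL' h1 h2.
rewrite /= big_cons -addnA -mulnS exprS mulrA.
have -> : (if neg then (if neg then t else t + k) else (if neg then t else t + k) + k * size L)
   = (if neg then t else t + k * (size L).+1)%N by case: neg => //; rewrite mulnS addnA.
have -> : (if neg then (if neg then d - w else d + w) - \sum_(j <- L) j
           else (if neg then d - w else d + w) + \sum_(j <- L) j)
   = (if neg then d - (w + \sum_(j <- L) j) else d + (w + \sum_(j <- L) j)).
  by case: neg; rewrite ?opprD addrA.
by [].
Qed.

Lemma chain_pair (beta : R) i0 t s (c : R) :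
  (forall j, closed_set KE H beta i0 (Vpart pt j)) -> g <= beta -> (1 < i0 * k)%N ->
  0 <= c -> (s + t * (i0 * k).-1 <= Stot)%N ->
  c * nR ^+ s <= #|Fam 0 t s|%:R ->
  c * delta ^+ t * nR ^+ (s + t * (i0 * k).-1)%N <= #|Fam 0 0 (s + t * (i0 * k).-1)%N|%:R.
Proof.
move=> cl hg ik; elim: t s c => [|t IH] s c c0 hs hF.
  by rewrite expr0 mulr1 mul0n addn0.
have d0 : 0 <= delta by rewrite !divr_ge0 // exprn_ge0.
have hs1 : (s + (i0 * k).-1 <= Stot)%N.
  by apply: leq_trans hs; rewrite leq_add2l mulSn leq_addr.
have h1 := @step_delta R V k r KE H pt u v 0 t.+1 s 0 t (i0 * k).-1 c g Stot c0 g0 hs1.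
have h2 := h1 (fun Z HZ => pair_lb cl HZ hg (hn_s (leq_trans (leq_addr _ _) hs1)) ik) hF.
have := IH _ _ (mulr_ge0 c0 d0) _ h2.
rewrite -addnA -mulSn exprS mulrA; apply; exact: hs.
Qed.

End Chain.

From HB Require Import structures.
From mathcomp Require Import all_boot all_order all_algebra.
From mathcomp Require Import reals.
From Stdlib Require Import ClassicalEpsilon.
From mathcomp Require Import lra ring zify.
Set Implicit Arguments. Unset Strict Implicit. Unset Printing Implicit Defensive.
Import Order.TTheory GRing.Theory Num.Theory.
Local Open Scope ring_scope.

Section Reach.
Variables (R : realType) (V : finType) (k r : nat) (KE : {set {set 'I_k}})
  (H : {set {set V}}) (pt : V -> 'I_r.+1).
Local Notation nR := (#|V|%:R : R).

Definition Sz (M i0 : nat) : nat := (2 * (k * M) + (1 + k * M) * (i0 * k).-1)%N.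

Lemma reach_uv (beta mu g : R) i0 M (P N : seq 'rV[int]_r) (j l : 'I_r) (u v : V) :
  (0 < k)%N -> (1 < i0 * k)%N -> 0 <= g -> g <= beta -> g <= mu / 2 ^+ (2 ^ k) ->
  (2 * (Sz M i0 + 2))%:R <= g * nR ->
  (forall j, closed_set KE H beta i0 (Vpart pt j)) ->
  (forall w, w \in P -> robust KE H pt mu w) ->
  (forall w, w \in N -> robust KE H pt mu w) ->
  size P = M -> size N = M ->
  \sum_(w <- P) w - \sum_(w <- N) w = unitv j - unitv l ->
  u \in Vpart pt j -> v \in Vpart pt l ->
  (g / 2 / 2 ^+ Sz M i0) ^+ (2 * M + (1 + k * M)) * nR ^+ Sz M i0 <=
  #|[set W : {set V} | (#|W| == Sz M i0)%N && has_Kfactor KE H (u |: W)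
        && has_Kfactor KE H (v |: W)]|%:R.
Proof.
move=> k0 ik g0 gb gm hn cl rP rN sP sN ePN uj vl.
set Stot := Sz M i0.
set delta := g / 2 / 2 ^+ Stot.
have dl0 : 0 <= delta by rewrite !divr_ge0 // exprn_ge0.
have hu : u \in ~: V0 pt.
  by move: uj; rewrite !inE => /eqP ->; rewrite eq_sym neq_lift.
have hv : v \in ~: V0 pt.
  by move: vl; rewrite !inE => /eqP ->; rewrite eq_sym neq_lift.
have eu : ivec pt [set u] = unitv j by apply: ivec1; apply/eqP; move: uj; rewrite inE.
have ev : ivec pt [set v] = unitv l by apply: ivec1; apply/eqP; move: vl; rewrite inE.
set dd := ivec pt [set u] - ivec pt [set v].
have F0 : 1 * nR ^+ 0 <= #|Fam KE H pt u v dd 1 0|%:R.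
  rewrite mul1r expr0 ler1n card_gt0; apply/set0Pn; exists set0.
  by rewrite inE cards0 eqxx /=; apply/pbP; apply: Inv_start.
have hsN : (0 + k * size N <= Stot)%N.
  by rewrite add0n sN /Stot /Sz mul2n -addnn -addnA leq_addr.
have h1 := @chain_copy R V k r KE H pt u v g Stot g0 hn false N mu dd 1 0 1 k0 rN gm ler01 hsN F0.
rewrite /= sN add0n mul1r in h1.
have hsP : (k * M + k * size P <= Stot)%N.
  by rewrite sP /Stot /Sz mul2n -addnn leq_addr.
have h2 := @chain_copy R V k r KE H pt u v g Stot g0 hn true P mu _ _ _ _ k0 rP gm
   (exprn_ge0 _ dl0) hsP h1.
rewrite /= sP in h2.
have e0 : dd + \sum_(w <- N) w - \sum_(w <- P) w = 0.
  by rewrite /dd eu ev -ePN subrK subrr.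
rewrite e0 in h2.
have hsT : (k * M + k * M + (1 + k * M) * (i0 * k).-1 <= Stot)%N.
  by rewrite /Stot /Sz mul2n -addnn.
have h3 := @chain_pair R V k r KE H pt u v g Stot g0 hn beta i0 _ _ _ cl gb ik
   (mulr_ge0 (exprn_ge0 _ dl0) (exprn_ge0 _ dl0)) hsT h2.
have eS : (k * M + k * M + (1 + k * M) * (i0 * k).-1)%N = Stot.
  by rewrite /Stot /Sz mul2n -addnn.
rewrite eS in h3.
apply: le_trans (_ : #|Fam KE H pt u v 0 0 Stot|%:R <= _).
  by apply: le_trans h3; rewrite -!exprD mul2n -addnn.
rewrite ler_nat; apply: subset_leq_card; apply/subsetP => W; rewrite !inE.
case/andP => -> /pbP /Inv_finish [-> ->]; by [].
Qed.
End Reach.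

From HB Require Import structures.
From mathcomp Require Import all_boot all_order all_algebra.
From mathcomp Require Import reals.
From Stdlib Require Import ClassicalEpsilon.
From mathcomp Require Import lra ring zify.
Set Implicit Arguments. Unset Strict Implicit. Unset Printing Implicit Defensive.
Import Order.TTheory GRing.Theory Num.Theory.
Local Open Scope ring_scope.

Section Sc.
Variables (r : nat).
Definition sc (w : 'rV[int]_r) : int := \sum_(j < r) w ord0 j.

Lemma scD a b : sc (a + b) = sc a + sc b.
Proof. by rewrite /sc -big_split; apply: eq_bigr => j _; rewrite mxE. Qed.

Lemma scN a : sc (- a) = - sc a.
Proof. by rewrite /sc -sumrN; apply: eq_bigr => j _; rewrite mxE. Qed.

Lemma sc0 : sc 0 = 0.
Proof. by rewrite /sc big1 // => j _; rewrite mxE. Qed.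

Lemma sc_sum (L : seq 'rV[int]_r) : sc (\sum_(w <- L) w) = \sum_(w <- L) sc w.
Proof.
elim: L => [|a L IH]; first by rewrite !big_nil sc0.
by rewrite !big_cons scD IH.
Qed.

Lemma sc_unit j : sc (unitv j) = 1.
Proof.
rewrite /sc (bigD1 j) //= big1 ?addr0; first by rewrite mxE !eqxx.
by move=> i ij; rewrite mxE (negbTE ij) andbF.
Qed.

Lemma sum_nseq (w : 'rV[int]_r) n : \sum_(x <- nseq n w) x = w *+ n.
Proof.
elim: n => [|n IH]; first by rewrite big_nil mulr0n.
by rewrite /= big_cons IH mulrS.
Qed.

End Sc.

Section Lat.
Variables (R : realType) (V : finType) (k r : nat) (KE : {set {set 'I_k}})
  (H : {set {set V}}) (pt : V -> 'I_r.+1) (mu : R).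
Local Notation rob := (robust KE H pt mu).

Lemma split_lattice (cs : seq ('rV[int]_r * int)) :
  (forall p, p \in cs -> rob p.1) ->
  exists P N : seq 'rV[int]_r,
    [/\ (forall w, w \in P -> rob w), (forall w, w \in N -> rob w) &
        \sum_(p <- cs) p.1 *~ p.2 = \sum_(w <- P) w - \sum_(w <- N) w].
Proof.
elim: cs => [|[w c] cs IH] hr.
  by exists [::], [::]; split => //; rewrite !big_nil subr0.
have [|P [N [rP rN e]]] := IH.
  by move=> p pcs; apply: hr; rewrite inE pcs orbT.
have rw : rob w by apply: (hr (w, c)); rewrite inE eqxx.
clear hr IH; case: c => n.
- exists (nseq n w ++ P), N; split.
  + by move=> x; rewrite mem_cat => /orP[/nseqP[-> _]|/rP].
  + exact: rN.
  + by rewrite big_cons e big_cat sum_nseq /= addrA.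
- exists P, (nseq n.+1 w ++ N); split.
  + exact: rP.
  + by move=> x; rewrite mem_cat => /orP[/nseqP[-> _]|/rN].
  + by rewrite big_cons e big_cat sum_nseq /= NegzE mulrNz opprD addrCA.
Qed.

Lemma rob_sc w : rob w -> sc w = k%:Z.
Proof. by case=> [[_ h] _]; exact: h. Qed.

Lemma sizes_eq (P N : seq 'rV[int]_r) (j l : 'I_r) : (0 < k)%N ->
  (forall w, w \in P -> rob w) -> (forall w, w \in N -> rob w) ->
  \sum_(w <- P) w - \sum_(w <- N) w = unitv j - unitv l -> size P = size N.
Proof.
move=> k0 rP rN /(congr1 (@sc r)); rewrite !scD !scN (sc_sum P) (sc_sum N) !sc_unit subrr.
have cs (L : seq 'rV[int]_r) : (forall w, w \in L -> rob w) -> \sum_(w <- L) sc w = (k * size L)%N%:Z.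
  elim: L => [|a L IH] hL; first by rewrite big_nil muln0.
  have ra : rob a by apply: hL; rewrite mem_head.
  rewrite big_cons IH ?(rob_sc ra) => [|x xL]; last by apply: hL; rewrite inE xL orbT.
  by rewrite /= mulnS PoszD.
rewrite (cs _ rP) (cs _ rN) => /eqP; rewrite subr_eq0 eqz_nat eqn_pmul2l //.
by move/eqP.
Qed.
End Lat.

Section Fin.
Variables (k r : nat).
Definition Fv := {ffun 'I_r -> 'I_k.+1}.
Definition dec (f : Fv) : 'rV[int]_r := \row_j ((f j : nat)%:Z).
Definition enc (w : 'rV[int]_r) : Fv := [ffun j => inord `|w ord0 j|%N].

Lemma encK w : kvector k w -> dec (enc w) = w.
Proof.
move=> [w0 sw]; apply/rowP => j; rewrite !mxE ffunE.
have wk : w ord0 j <= k%:Z.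
  rewrite -sw (bigD1 j) //= lerDl; apply: sumr_ge0 => i _; exact: w0.
have wa : (`|w ord0 j| <= k)%N.
  by rewrite -lez_nat gez0_abs // w0.
by rewrite inordK ?ltnS // gez0_abs.
Qed.

Definition repP (T : {set Fv}) (j l : 'I_r) (m : nat) : Prop :=
  exists P N : seq Fv, [/\ size P = m, size N = m, {subset P <= T}, {subset N <= T} &
    \sum_(f <- P) dec f - \sum_(f <- N) dec f = unitv j - unitv l].

Definition msz T j l : nat :=
  match excluded_middle_informative (exists m, repP T j l m) with
  | left h => proj1_sig (constructive_indefinite_description _ h)
  | right _ => 0%N
  end.

Lemma mszP T j l : (exists m, repP T j l m) -> repP T j l (msz T j l).
Proof.
rewrite /msz => h; case: excluded_middle_informative => // h'.
by case: constructive_indefinite_description.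
Qed.

Definition Mb : nat :=
  \max_(T : {set Fv}) \max_(j < r) \max_(l < r | (j < l)%N) msz T j l.

Lemma msz_le T (j l : 'I_r) : (j < l)%N -> (msz T j l <= Mb)%N.
Proof.
move=> jl; apply: leq_trans (leq_bigmax T); apply: leq_trans (leq_bigmax j).
exact: (@leq_bigmax_cond _ (fun l : 'I_r => (j < l)%N) (fun l => msz T j l) l jl).
Qed.

Lemma Mb0 : ~ (exists j l : 'I_r, (j < l)%N) -> Mb = 0%N.
Proof.
move=> hn; apply/eqP; rewrite -leqn0; apply/bigmax_leqP => T _.
apply/bigmax_leqP => j _; apply/bigmax_leqP => l jl.
by case: hn; exists j, l.
Qed.

End Fin.

Section Reps.
Variables (R : realType) (V : finType) (k r : nat) (KE : {set {set 'I_k}})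
  (H : {set {set V}}) (pt : V -> 'I_r.+1) (mu : R).
Local Notation rob := (robust KE H pt mu).

Lemma unit_diff_neq0 (j l : 'I_r) : (j < l)%N -> unitv j - unitv l != 0.
Proof.
move=> jl; apply/eqP => /(congr1 (fun M : 'rV[int]_r => M ord0 j)).
have jl' : (j == l) = false by apply/negbTE; rewrite neq_ltn jl.
by rewrite !mxE !eqxx jl'.
Qed.

Lemma reps (k0 : (0 < k)%N) :
  (forall j l : 'I_r, (j < l)%N -> in_lattice KE H pt mu (unitv j - unitv l)) ->
  forall j l : 'I_r, exists P N : seq 'rV[int]_r,
    [/\ (forall w, w \in P -> rob w), (forall w, w \in N -> rob w),
        size P = Mb k r, size N = Mb k r &
        \sum_(w <- P) w - \sum_(w <- N) w = unitv j - unitv l].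
Proof.
move=> hlat.
have ex_rob : (exists j l : 'I_r, (j < l)%N) -> exists w0, rob w0.
  case=> j [l jl]; have [cs [hcs ecs]] := hlat j l jl.
  have [P [N [rP rN ePN]]] := split_lattice hcs.
  case: P rP ePN => [|w P] rP ePN; last by exists w; apply: rP; rewrite mem_head.
  case: N rN ePN => [|w N] rN ePN; last by exists w; apply: rN; rewrite mem_head.
  by move: (unit_diff_neq0 jl); rewrite ecs ePN !big_nil subr0 eqxx.
have base : forall j l : 'I_r, (j < l)%N -> exists P N : seq 'rV[int]_r,
    [/\ (forall w, w \in P -> rob w), (forall w, w \in N -> rob w),
        size P = size N, (size P <= Mb k r)%N &
        \sum_(w <- P) w - \sum_(w <- N) w = unitv j - unitv l].
  move=> j l jl; have [cs [hcs ecs]] := hlat j l jl.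
  have [P0 [N0 [rP rN ePN]]] := split_lattice hcs.
  move: ePN; rewrite -ecs => /esym ePN.
  have sPN := sizes_eq k0 rP rN ePN.
  pose T := [set f : Fv k r | pb (rob (dec f))].
  have hrep : repP T j l (size P0).
    exists (map (@enc k r) P0), (map (@enc k r) N0); split.
    - by rewrite size_map.
    - by rewrite size_map sPN.
    - move=> f /mapP[w wP ->]; rewrite inE; apply/pbP.
      by rewrite encK; [apply: rP | case: (rP w wP)].
    - move=> f /mapP[w wN ->]; rewrite inE; apply/pbP.
      by rewrite encK; [apply: rN | case: (rN w wN)].
    - rewrite !big_map -ePN; congr (_ - _); apply: eq_big_seq => w wL; rewrite encK //.
      + by case: (rP w wL).
      + by case: (rN w wL).
  have [P1 [N1 [s1 s2 h1 h2 e]]] := mszP (ex_intro _ _ hrep).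
  exists (map (@dec k r) P1), (map (@dec k r) N1); split.
  - by move=> w /mapP[f /h1]; rewrite inE => /pbP ? ->.
  - by move=> w /mapP[f /h2]; rewrite inE => /pbP ? ->.
  - by rewrite !size_map s1 s2.
  - by rewrite size_map s1 msz_le.
  - by rewrite !big_map.
have pad : forall (j l : 'I_r) (P N : seq 'rV[int]_r),
    (forall w, w \in P -> rob w) -> (forall w, w \in N -> rob w) ->
    size P = size N -> (size P <= Mb k r)%N ->
    \sum_(w <- P) w - \sum_(w <- N) w = unitv j - unitv l ->
    exists P N : seq 'rV[int]_r,
    [/\ (forall w, w \in P -> rob w), (forall w, w \in N -> rob w),
        size P = Mb k r, size N = Mb k r &
        \sum_(w <- P) w - \sum_(w <- N) w = unitv j - unitv l].
  move=> j l P N rP rN sPN sM e.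
  case: (ltngtP (size P) (Mb k r)) => [lt|gt|eq]; last first.
  - by exists P, N; split => //; rewrite -sPN.
  - by move: sM; rewrite leqNgt gt.
  have [w0 rw0] : exists w0, rob w0.
    apply: ex_rob; case: (excluded_middle_informative (exists j l : 'I_r, (j < l)%N)) => // hn.
    by rewrite (@Mb0 k r hn) in lt.
  exists (P ++ nseq (Mb k r - size P) w0), (N ++ nseq (Mb k r - size P) w0); split.
  - by move=> w; rewrite mem_cat => /orP[/rP|/nseqP[-> _]].
  - by move=> w; rewrite mem_cat => /orP[/rN|/nseqP[-> _]].
  - by rewrite size_cat size_nseq subnKC // ltnW.
  - by rewrite size_cat size_nseq -sPN subnKC // ltnW.
  - by rewrite !big_cat /= opprD addrACA subrr addr0.
move=> j l; case: (ltngtP j l) => [jl|lj|/val_inj ->].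
- have [P [N [rP rN sPN sM e]]] := base j l jl; exact: pad rP rN sPN sM e.
- have [P [N [rP rN sPN sM e]]] := base l j lj.
  apply: (pad j l N P rN rP (esym sPN)); first by rewrite -sPN.
  by rewrite -opprB e opprB.
- apply: (pad l l [::] [::]) => //; by rewrite !big_nil !subrr.
Qed.

End Reps.

From HB Require Import structures.
From mathcomp Require Import all_boot all_order all_algebra.
From mathcomp Require Import reals.
From Stdlib Require Import ClassicalEpsilon.
From mathcomp Require Import lra ring zify.
Import Order.TTheory GRing.Theory Num.Theory.
Local Open Scope ring_scope.

Unset Implicit Arguments.
Theorem lemma3p9 (R : realType) (k : nat) (KE : {set {set 'I_k}}) :
  (3 <= k)%N -> complete3partite KE ->
  forall (eps beta mu' : R) (i0 r : nat),
  0 < eps -> 0 < beta -> 0 < mu' -> (0 < i0)%N -> (0 < r)%N ->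
  exists beta' : R, 0 < beta' /\
  exists i0' : nat, (0 < i0')%N /\
  exists n0 : nat,
  forall (V : finType) (H : {set {set V}}) (pt : V -> 'I_r.+1),
    uniform3 H -> (n0 <= #|V|)%N ->
    (forall j : 'I_r,
       eps ^+ 2 * #|V|%:R / 2 <= #|Vpart pt j|%:R /\
       closed_set KE H beta i0 (Vpart pt j)) ->
    (forall j l : 'I_r, (j < l)%N -> in_lattice KE H pt mu' (unitv j - unitv l)) ->
    closed_set KE H beta' i0' (~: V0 pt).
Proof.
move=> hk _ eps beta mu' i0 r e0 b0 m0 i00 r0.
have k0 : (0 < k)%N by apply: leq_trans hk.
have ik : (1 < i0 * k)%N by apply: leq_trans (leq_pmull _ i00); apply: leq_trans hk.
pose M := Mb k r.
pose g := Num.min beta (mu' / 2 ^+ (2 ^ k)).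
have g0 : 0 < g by rewrite lt_min b0 divr_gt0 // exprn_gt0.
have gb : g <= beta by rewrite ge_min lexx.
have gm : g <= mu' / 2 ^+ (2 ^ k) by rewrite ge_min lexx orbT.
pose Stot := Sz k M i0.
pose delta := g / 2 / 2 ^+ Stot.
have dl0 : 0 < delta by rewrite !divr_gt0 // exprn_gt0.
exists (delta ^+ (2 * M + (1 + k * M))); split; first by rewrite exprn_gt0.
exists (M * i0 * k + i0 + M)%N; split; first by rewrite addn_gt0 addn_gt0 i00 orbT.
pose N1 := (Num.truncn g^-1).+1.
have gN1 : 1 <= g * N1%:R.
  have := truncnS_gt g^-1; rewrite -/N1 => h.
  by move: h; rewrite -(ltr_pM2l g0) mulfV ?lt0r_neq0 // => /ltW.
exists ((2 * (Stot + 2)) * N1)%N => V H pt _ hn hparts hlat u v hu hv.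
have cl : forall j, closed_set KE H beta i0 (Vpart pt j) by move=> j; case: (hparts j).
have hnR : (2 * (Stot + 2))%:R <= g * (#|V|%:R : R).
  apply: le_trans (_ : g * ((2 * (Stot + 2)) * N1)%:R <= _); last first.
    by rewrite ler_pM2l // ler_nat.
  have -> : g * ((2 * (Stot + 2)) * N1)%:R = (2 * (Stot + 2))%:R * (g * N1%:R) :> R.
    by rewrite (natrM _ (2 * (Stot + 2))%N N1) mulrCA.
  apply: le_trans (_ : (2 * (Stot + 2))%:R * 1 <= _); first by rewrite mulr1.
  by rewrite ler_pM2l // ltr0n muln_gt0 /= addn_gt0 orbT.
have [j ej] : exists j : 'I_r, pt u = lift ord0 j.
  move: hu; rewrite !inE; case: (unliftP ord0 (pt u)) => [j' -> _|->]; last by rewrite eqxx.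
  by exists j'.
have [l el] : exists l : 'I_r, pt v = lift ord0 l.
  move: hv; rewrite !inE; case: (unliftP ord0 (pt v)) => [j' -> _|->]; last by rewrite eqxx.
  by exists j'.
have [P [N [rP rN sP sN ePN]]] := reps k0 hlat j l.
have uj : u \in Vpart pt j by rewrite inE; apply/eqP.
have vl : v \in Vpart pt l by rewrite inE; apply/eqP.
have h := reach_uv k0 ik (ltW g0) gb gm hnR cl rP rN sP sN ePN uj vl.
have eS : Sz k M i0 = ((M * i0 * k + i0 + M) * k).-1.
  rewrite /Sz; move: ik; set a := (i0 * k)%N => ik.
  have -> : ((M * i0 * k + i0 + M) * k = k * M * a + a + k * M)%N.
    apply/eqP; rewrite -eqz_nat /a !PoszM !PoszD !PoszM; apply/eqP; ring.
  rewrite -(prednK (ltnW ik)); set b := a.-1.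
  rewrite addnS addSn /=.
  apply/eqP; rewrite -eqz_nat add0n mulSn mulnS !PoszD !PoszM; apply/eqP; ring.
rewrite /reachable -eS; exact: h.
Qed.
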